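(* In the setting described in the context, there is a one-to-one correspondence between complex structures $J$ on $L$ (as defined in the context) and symmetric bilinear forms $\Omega:Q\times Q\to\mathbb{C}$ with positive definite real part, given by assigning to $J$ the form $$\Omega_J(\phi,\phi')=g_J(j_J(\phi),j_J(\phi'))-\mathrm{i}\,[j_J(\phi),\phi'],\qquad\phi,\phi'\in Q.$$ That is, $J\mapsto\Omega_J$ is a bijection from the set of complex structures on $L$ onto the set of symmetric bilinear forms $Q\times Q\to\mathbb{C}$ with positive definite real part.
   Context: $L$ is a finite-dimensional real vector space and $[\cdot,\cdot]:L\times L\to\mathbb{R}$ is a bilinear form such that $\omega(\xi,\xi')=\frac12[\xi,\xi']-\frac12[\xi',\xi]$ is non-degenerate. Set $M=\{\tau\in L:[\xi,\tau]=0\ \forall\xi\in L\}$ and $N=\{\tau\in L:[\tau,\xi]=0\ \forall\xi\in L\}$, and assume $L=M\oplus N$. Let $Q=L/M$ with quotient map $q:L\to Q$; $[\cdot,\cdot]$ descends to $L\times Q\to\mathbb{R}$. A complex structure on $L$ is a linear map $J:L\to L$ with $J^2=-\mathrm{id}$, $\omega(J\xi,J\tau)=\omega(\xi,\tau)$ for all $\xi,\tau$, and such that $g_J(\tau,\xi):=2\omega(\tau,J\xi)$ is positive definite. For such $J$, $j_J:Q\to L$ is the unique linear map with $q\circ j_J=\mathrm{id}_Q$ and $j_J(Q)\subseteq JM$. *)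

(* Defs.v *)
From HB Require Import structures.
From mathcomp Require Import all_boot all_order all_algebra.
From mathcomp Require Import reals complex.
Set Implicit Arguments. Unset Strict Implicit. Unset Printing Implicit Defensive.
Import Order.TTheory GRing.Theory Num.Theory.
Local Open Scope ring_scope.

Section Defs.
Variable R : realType.

Definition bilinear_form (V : lmodType R) (B : V -> V -> R) : Prop :=
  (forall x a u v, B x (a *: u + v) = a * B x u + B x v) /\
  (forall y a u v, B (a *: u + v) y = a * B u y + B v y).

Variable L : vectType R.
Variable B : L -> L -> R.

Definition omega (x y : L) : R := 2^-1 * B x y - 2^-1 * B y x.

Definition nondegenerate_form (w : L -> L -> R) : Prop :=
  forall x, (forall y, w x y = 0) -> x = 0.

Definition inM (t : L) : Prop := forall x, B x t = 0.
Definition inN (t : L) : Prop := forall x, B t x = 0.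

Definition direct_sum_MN : Prop :=
  (forall x, exists m n, inM m /\ inN n /\ x = m + n) /\
  (forall x, inM x -> inN x -> x = 0).

Definition linear_map (V W : lmodType R) (f : V -> W) : Prop :=
  forall a u v, f (a *: u + v) = a *: f u + f v.

Definition gJ (J : L -> L) (t x : L) : R := 2 * omega t (J x).

Definition complex_structure (J : L -> L) : Prop :=
  [/\ linear_map J,
      (forall x, J (J x) = - x),
      (forall x y, omega (J x) (J y) = omega x y) &
      (forall x, x != 0 -> 0 < gJ J x x)].

(* Q = L/M given by a quotient map q : L -> Q (linear, onto, kernel M) *)
Variable Q : vectType R.
Variable q : L -> Q.

Definition quotient_map_by_M : Prop :=
  [/\ linear_map q,
      (forall phi, exists x, q x = phi) &
      (forall x, q x = 0 <-> inM x)].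

Definition is_jJ (J : L -> L) (j : Q -> L) : Prop :=
  [/\ linear_map j,
      (forall phi, q (j phi) = phi) &
      (forall phi, exists m, inM m /\ j phi = J m)].

(* Omega is Omega_J:
   Omega(phi,phi') = g_J(j_J phi, j_J phi') - i [j_J phi, phi'],
   where [., .] : L x Q -> R is the descended form, i.e. [x, q xi'] = [x, xi']. *)
Definition is_OmegaJ (J : L -> L) (Om : Q -> Q -> R[i]) : Prop :=
  exists j, is_jJ J j /\
    forall x x' : L,
      Om (q x) (q x') =
        ((gJ J (j (q x)) (j (q x')))%:C - 'i * (B (j (q x)) x')%:C)%C.

Definition sym_bilinear_posdefRe (Om : Q -> Q -> R[i]) : Prop :=
  [/\ (forall phi phi', Om phi phi' = Om phi' phi),
      (forall phi a u v, Om phi (a *: u + v) = (a%:C * Om phi u + Om phi v)%C),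
      (forall phi a u v, Om (a *: u + v) phi = (a%:C * Om u phi + Om v phi)%C) &
      (forall phi, phi != 0 -> 0 < Re (Om phi phi))].

End Defs.

(* Main.v *)
Require Import Defs.
From HB Require Import structures.
From mathcomp Require Import all_boot all_order all_algebra.
From mathcomp Require Import reals complex.
From Stdlib Require Import IndefiniteDescription.
From mathcomp Require Import ring lra.
From Stdlib Require Import FunctionalExtensionality.
Import Order.TTheory GRing.Theory Num.Theory.
Local Open Scope ring_scope.
Set Implicit Arguments. Unset Strict Implicit.

Local Open Scope complex_scope.
Lemma cf (R : realType) (a b : R) : (a%:C - 'i * b%:C) = Complex a (- b).
Proof. apply/eqP; rewrite eq_complex /=. apply/andP; split; apply/eqP; ring. Qed.
Lemma cadd (R : realType) (a b c d : R) : Complex a b + Complex c d = Complex (a + c) (b + d).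
Proof. by []. Qed.
Lemma cscal (R : realType) (a c d : R) : a%:C * Complex c d = Complex (a * c) (a * d).
Proof. apply/eqP; rewrite eq_complex /=. apply/andP; split; apply/eqP; ring. Qed.
Local Close Scope complex_scope.

Section Aux.
Variable R : realType.

Definition mkLin (V W : lmodType R) (f : V -> W) (hf : linear_map f) : {linear V -> W} :=
  HB.pack f (GRing.isLinear.Build R V W *:%R f hf).

Lemma mkLinE (V W : lmodType R) (f : V -> W) (hf : linear_map f) x : mkLin hf x = f x.
Proof. by []. Qed.

Lemma lm0 (V W : lmodType R) (f : V -> W) : linear_map f -> f 0 = 0.
Proof. move=> hf; exact: (linear0 (mkLin hf)). Qed.
Lemma lmD (V W : lmodType R) (f : V -> W) : linear_map f -> forall x y, f (x + y) = f x + f y.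
Proof. move=> hf; exact: (linearD (mkLin hf)). Qed.
Lemma lmB (V W : lmodType R) (f : V -> W) : linear_map f -> forall x y, f (x - y) = f x - f y.
Proof. move=> hf; exact: (linearB (mkLin hf)). Qed.
Lemma lmN (V W : lmodType R) (f : V -> W) : linear_map f -> forall x, f (- x) = - f x.
Proof. move=> hf; exact: (linearN (mkLin hf)). Qed.
Lemma lmZ (V W : lmodType R) (f : V -> W) : linear_map f -> forall a x, f (a *: x) = a *: f x.
Proof. by move=> hf a x; rewrite -[a *: x]addr0 hf lm0 // addr0. Qed.

Definition slin (V : lmodType R) (f : V -> R) :=
  forall a u v, f (a *: u + v) = a * f u + f v.

Lemma slin0 (V : lmodType R) (f : V -> R) : slin f -> f 0 = 0.
Proof. move=> hf; exact: (linear0 (mkLin (hf : linear_map (f : V -> R^o)))). Qed.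
Lemma slinD (V : lmodType R) (f : V -> R) : slin f -> forall u v, f (u + v) = f u + f v.
Proof. move=> hf; exact: (linearD (mkLin (hf : linear_map (f : V -> R^o)))). Qed.
Lemma slinB (V : lmodType R) (f : V -> R) : slin f -> forall u v, f (u - v) = f u - f v.
Proof. move=> hf; exact: (linearB (mkLin (hf : linear_map (f : V -> R^o)))). Qed.
Lemma slinN (V : lmodType R) (f : V -> R) : slin f -> forall u, f (- u) = - f u.
Proof. move=> hf; exact: (linearN (mkLin (hf : linear_map (f : V -> R^o)))). Qed.
Lemma slinZ (V : lmodType R) (f : V -> R) : slin f -> forall a u, f (a *: u) = a * f u.
Proof. by move=> hf a u; rewrite -[a *: u]addr0 hf slin0 // addr0. Qed.
Lemma slin_sum (V : lmodType R) (f : V -> R) : slin f -> forall n (c : 'I_n -> R) (v : 'I_n -> V),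
  f (\sum_i c i *: v i) = \sum_i c i * f (v i).
Proof.
move=> hf n c v; have := linear_sum (mkLin (hf : linear_map (f : V -> R^o))) (index_enum 'I_n) xpredT (fun i => c i *: v i).
rewrite mkLinE => ->; apply: eq_bigr => i _; exact: slinZ.
Qed.

Lemma inj_surj (V W : vectType R) (f : V -> W) : linear_map f -> injective f ->
  (\dim {:V} = \dim {:W})%N -> forall w, exists v, f v = w.
Proof.
move=> hf fi dimE w.
pose fl := linfun (mkLin hf).
have k0 : lker fl == 0%VS.
  by apply/lker0P => x y; rewrite !lfunE /=; apply: fi.
have : (limg fl == fullv)%VS.
  rewrite eqEdim subvf /= -dimE.
  by rewrite -(limg_ker_dim fl fullv) (eqP k0) capv0 dimv0 add0n.
move/eqP => h.
have : w \in limg fl by rewrite h memvf.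
by case/memv_imgP => v _ ->; exists v; rewrite lfunE.
Qed.

Lemma riesz (V : vectType R) (b : V -> V -> R) :
  (forall x, slin (b x)) ->
  (forall y, slin (b^~ y)) ->
  (forall x, (forall y, b x y = 0) -> x = 0) ->
  forall f : V -> R, slin f -> exists x, forall y, b x y = f y.
Proof.
move=> b2 b1 nd f hf.
pose n := \dim {:V}.
pose e := vbasis (fullv : {vspace V}).
have expand : forall (h : V -> R), slin h -> forall y,
    h y = \sum_(i < n) coord e i y * h e`_i.
  by move=> h hh y; rewrite {1}(coord_vbasis (memvf y)) slin_sum.
pose Phi (x : V) : 'rV[R]_n := \row_i b x e`_i.
have Phil : linear_map Phi.
  by move=> a u v; apply/rowP => i; rewrite !mxE b1.
have Phii : injective Phi.
  move=> x y h; apply/eqP; rewrite -subr_eq0; apply/eqP; apply: nd => z.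
  have -> : b (x - y) z = b x z - b y z by exact: (slinB (b1 z)).
  rewrite (expand _ (b2 x)) (expand _ (b2 y)) -sumrB big1 // => i _.
  have /rowP/(_ i) := h; rewrite !mxE => ->; by rewrite subrr.
have dE : (\dim {:V} = \dim {:'rV[R]_n})%N by rewrite [in RHS]dimvf /= /dim /= mul1n.
have [x hx] := inj_surj Phil Phii dE (\row_i f e`_i).
exists x => y; rewrite (expand _ (b2 x)) (expand _ hf); apply: eq_bigr => i _.
by have /rowP/(_ i) := hx; rewrite !mxE => ->.
Qed.
End Aux.

Lemma choice_fun (A Bt : Type) (P : A -> Bt -> Prop) :
  (forall a, exists b, P a b) -> exists f : A -> Bt, forall a, P a (f a).
Proof.
move=> h; exists (fun a => proj1_sig (IndefiniteDescription.constructive_indefinite_description _ (h a))).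
move=> a; exact: proj2_sig (IndefiniteDescription.constructive_indefinite_description _ (h a)).
Qed.

Section Main.
Variables (R : realType) (L : vectType R) (B : L -> L -> R) (Q : vectType R) (q : L -> Q).
Hypothesis HB : bilinear_form B.
Hypothesis Hnd : nondegenerate_form (omega B).
Hypothesis Hds : direct_sum_MN B.
Hypothesis Hq : quotient_map_by_M B q.

Local Notation om := (omega B).

Lemma B2 x : slin (B x). Proof. by move=> a u v; case: HB => h _; apply: h. Qed.
Lemma B1 y : slin (B^~ y). Proof. by move=> a u v; case: HB => _ h; apply: h. Qed.
Lemma om2 x : slin (om x).
Proof. move=> a u v; rewrite /omega (B2 x) (B1 x); ring. Qed.
Lemma om1 y : slin (om^~ y).
Proof. move=> a u v; rewrite /omega /= (B2 y) (B1 y); ring. Qed.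
Lemma om_anti x y : om y x = - om x y.
Proof. rewrite /omega; ring. Qed.
Lemma omxx x : om x x = 0.
Proof. rewrite /omega; ring. Qed.

Lemma inM_lin a u v : inM B u -> inM B v -> inM B (a *: u + v).
Proof. by move=> hu hv x; rewrite B2 hu hv; ring. Qed.
Lemma inN_lin a u v : inN B u -> inN B v -> inN B (a *: u + v).
Proof. by move=> hu hv x; rewrite (B1 x) hu hv; ring. Qed.
Lemma inM0 : inM B 0. Proof. by move=> x; rewrite slin0 //; apply: B2. Qed.
Lemma inN0 : inN B 0. Proof. by move=> x; have := slin0 (B1 x). Qed.
Lemma inMD u v : inM B u -> inM B v -> inM B (u + v).
Proof. by move=> hu hv; rewrite -[u]scale1r; apply: inM_lin. Qed.
Lemma inMN u : inM B u -> inM B (- u).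
Proof. by move=> hu; rewrite -[- u]addr0 -scaleN1r; apply: inM_lin => //; apply: inM0. Qed.
Lemma inMB u v : inM B u -> inM B v -> inM B (u - v).
Proof. by move=> hu hv; apply: inMD => //; apply: inMN. Qed.
Lemma inMZ a u : inM B u -> inM B (a *: u).
Proof. by move=> hu; rewrite -[_ *: _]addr0; apply: inM_lin => //; apply: inM0. Qed.
Lemma inND u v : inN B u -> inN B v -> inN B (u + v).
Proof. by move=> hu hv; rewrite -[u]scale1r; apply: inN_lin. Qed.
Lemma inNN u : inN B u -> inN B (- u).
Proof. by move=> hu; rewrite -[- u]addr0 -scaleN1r; apply: inN_lin => //; apply: inN0. Qed.
Lemma inNB u v : inN B u -> inN B v -> inN B (u - v).
Proof. by move=> hu hv; apply: inND => //; apply: inNN. Qed.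

Lemma MN0 x : inM B x -> inN B x -> x = 0.
Proof. by case: Hds => _; apply. Qed.

Lemma decomp_uniq m n m' n' : inM B m -> inN B n -> inM B m' -> inN B n' ->
  m + n = m' + n' -> m = m' /\ n = n'.
Proof.
move=> hm hn hm' hn' e.
have e1 : m - m' = n' - n.
  have -> : m - m' = (m + n) - (m' + n) by rewrite opprD addrACA subrr addr0.
  by rewrite e opprD addrACA subrr add0r.
have h0 : m - m' = 0 by apply: MN0; [apply: inMB | rewrite e1; apply: inNB].
split; first by apply/eqP; rewrite -subr_eq0 h0.
by apply/eqP; rewrite eq_sym -subr_eq0 -e1 h0.
Qed.

Lemma omM m y : inM B m -> om m y = 2^-1 * B m y.
Proof. by move=> hm; rewrite /omega hm; ring. Qed.
Lemma omN n y : inN B n -> om n y = - (2^-1 * B y n).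
Proof. by move=> hn; rewrite /omega hn; ring. Qed.
Lemma omMM m m' : inM B m -> inM B m' -> om m m' = 0.
Proof. by move=> hm hm'; rewrite omM // hm'; ring. Qed.


Lemma decomp1 x : exists m, inM B m /\ inN B (x - m).
Proof.
case: Hds => h _; have [m [n [hm [hn e]]]] := h x.
by exists m; split => //; rewrite e addrAC subrr add0r.
Qed.

Definition pM (x : L) : L := proj1_sig (constructive_indefinite_description _ (decomp1 x)).
Definition pN (x : L) : L := x - pM x.

Lemma pMP x : inM B (pM x). Proof. exact: (proj2_sig (constructive_indefinite_description _ (decomp1 x))).1. Qed.
Lemma pNP x : inN B (pN x). Proof. exact: (proj2_sig (constructive_indefinite_description _ (decomp1 x))).2. Qed.
Lemma pMN x : x = pM x + pN x. Proof. by rewrite /pN addrC subrK. Qed.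

Lemma pM_lin : linear_map pM.
Proof.
move=> a u v.
have e : pM (a *: u + v) + pN (a *: u + v) = (a *: pM u + pM v) + (a *: pN u + pN v).
  by rewrite -pMN {1}(pMN u) {1}(pMN v) scalerDr addrACA.
by case: (decomp_uniq (pMP (a *: u + v)) (pNP _) (inM_lin a (pMP u) (pMP v)) (inN_lin a (pNP u) (pNP v)) e).
Qed.
Lemma pN_lin : linear_map pN.
Proof. by move=> a u v; rewrite /pN pM_lin scalerBr addrACA opprD. Qed.

Lemma pM_M m : inM B m -> pM m = m.
Proof.
move=> hm; have e : pM m + pN m = m + 0 by rewrite addr0 -pMN.
by case: (decomp_uniq (pMP m) (pNP m) hm inN0 e).
Qed.
Lemma pN_M m : inM B m -> pN m = 0.
Proof. by move=> hm; rewrite /pN pM_M // subrr. Qed.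
Lemma pM_N n : inN B n -> pM n = 0.
Proof.
move=> hn; have e : pM n + pN n = 0 + n by rewrite add0r -pMN.
by case: (decomp_uniq (pMP n) (pNP n) inM0 hn e).
Qed.
Lemma pN_N n : inN B n -> pN n = n.
Proof. by move=> hn; rewrite /pN pM_N // subr0. Qed.

Lemma om_inj x x' : (forall y, om x y = om x' y) -> x = x'.
Proof.
move=> h; apply/eqP; rewrite -subr_eq0; apply/eqP; apply: Hnd => y.
have -> : om (x - x') y = om x y - om x' y by exact: (slinB (om1 y)).
by rewrite h subrr.
Qed.

Lemma BnotM_N x : (forall m, inM B m -> B m x = 0) -> inM B x.
Proof.
move=> h z; rewrite (pMN z) (slinD (B1 x)) h ?pMP //.
by rewrite (pNP z) addr0.
exact: pMP.
Qed.

Lemma RepM (f : L -> R) : slin f -> (forall m, inM B m -> f m = 0) ->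
  exists m, inM B m /\ forall y, om m y = f y.
Proof.
move=> hf hM.
have [x hx] := riesz om2 om1 Hnd hf.
have hNx : inM B (pN x).
  apply: BnotM_N => m hm.
  have := hx m; rewrite hM // {1}(pMN x) (slinD (om1 m)) (omMM (pMP x) hm) add0r (omN _ (pNP x)).
  by move/eqP; rewrite oppr_eq0 mulf_eq0 invr_eq0 pnatr_eq0 /= => /eqP.
have e : x = pM x by rewrite {1}(pMN x) (MN0 hNx (pNP x)) addr0.
by exists x; split => //; rewrite e; apply: pMP.
Qed.

Lemma q_lin : linear_map q. Proof. by case: Hq. Qed.
Lemma q_surj phi : exists x, q x = phi. Proof. by case: Hq => _ h _; apply: h. Qed.
Lemma q_ker x : q x = 0 <-> inM B x. Proof. by case: Hq => _ _ h; apply: h. Qed.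
Lemma qB x y : q (x - y) = q x - q y. Proof. exact: (linearB (mkLin q_lin)). Qed.
Lemma qD x y : q (x + y) = q x + q y. Proof. exact: (linearD (mkLin q_lin)). Qed.
Lemma q0 : q 0 = 0. Proof. exact: (linear0 (mkLin q_lin)). Qed.
Lemma qZ a x : q (a *: x) = a *: q x. Proof. by rewrite -[a *: x]addr0 q_lin q0 addr0. Qed.
Lemma qeqP x y : q x = q y <-> inM B (x - y).
Proof. by rewrite -q_ker qB; split => [->|/eqP]; [rewrite subrr | rewrite subr_eq0 => /eqP]. Qed.
Lemma qM m : inM B m -> q m = 0. Proof. by move/q_ker. Qed.
Lemma q_pN x : q (pN x) = q x.
Proof. by rewrite {2}(pMN x) qD (qM (pMP x)) add0r. Qed.

Lemma Bq x y y' : q y = q y' -> B x y = B x y'.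
Proof.
move/qeqP => h; apply/eqP; rewrite -subr_eq0; apply/eqP.
by rewrite -(slinB (B2 x)) h.
Qed.

Section Part1.
Variable J : L -> L.
Hypothesis HJ : complex_structure B J.

Lemma J_lin : linear_map J. Proof. by case: HJ. Qed.
Lemma JJ x : J (J x) = - x. Proof. by case: HJ => _ h _ _; apply: h. Qed.
Lemma Jom x y : om (J x) (J y) = om x y. Proof. by case: HJ => _ _ h _; apply: h. Qed.
Lemma gpos x : x != 0 -> 0 < gJ B J x x. Proof. by case: HJ => _ _ _ h; apply: h. Qed.
Lemma J0 : J 0 = 0. Proof. exact: (linear0 (mkLin J_lin)). Qed.
Lemma JD x y : J (x + y) = J x + J y. Proof. exact: (linearD (mkLin J_lin)). Qed.
Lemma JB x y : J (x - y) = J x - J y. Proof. exact: (linearB (mkLin J_lin)). Qed.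
Lemma JN x : J (- x) = - J x. Proof. exact: (linearN (mkLin J_lin)). Qed.

Lemma gsym x y : gJ B J x y = gJ B J y x.
Proof.
by rewrite /gJ -(Jom y (J x)) JJ (slinN (om2 _)) om_anti.
Qed.
Lemma g2 x : slin (gJ B J x).
Proof. by move=> a u v; rewrite /gJ J_lin (om2 x); ring. Qed.
Lemma g1 y : slin ((gJ B J)^~ y).
Proof. by move=> a u v; rewrite /gJ /= (om1 (J y)); ring. Qed.

Lemma iso0 x : om x (J x) = 0 -> x = 0.
Proof.
move=> h; apply/eqP; apply: contraT => hx.
by have := gpos hx; rewrite /gJ h mulr0 ltxx.
Qed.

Lemma MJM m : inM B m -> inM B (J m) -> m = 0.
Proof. by move=> hm hJm; apply: iso0; apply: omMM. Qed.
Lemma NJN n : inN B n -> inN B (J n) -> n = 0.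
Proof. by move=> hn hJn; apply: iso0; rewrite /omega hn hJn; ring. Qed.

Definition FF (x : L) := pN (J (pM x)) + pM (J (pN x)).

Lemma FF_lin : linear_map FF.
Proof.
move=> a u v; rewrite /FF pM_lin J_lin pN_lin pN_lin J_lin pM_lin.
by rewrite [in RHS]scalerDr [LHS]addrACA.
Qed.

Lemma FF0 z : FF z = 0 -> z = 0.
Proof.
rewrite /FF => e.
have e' : pM (J (pN z)) + pN (J (pM z)) = 0 + 0 by rewrite addr0 addrC.
have [h1 h2] := decomp_uniq (pMP _) (pNP _) inM0 inN0 e'.
have hm : pM z = 0.
  apply: MJM; first exact: pMP.
  by rewrite (pMN (J (pM z))) h2 addr0; apply: pMP.
have hn : pN z = 0.
  apply: NJN; first exact: pNP.
  by rewrite (pMN (J (pN z))) h1 add0r; apply: pNP.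
by rewrite (pMN z) hm hn addr0.
Qed.

Lemma FF_inj : injective FF.
Proof.
move=> x y e; apply/eqP; rewrite -subr_eq0; apply/eqP; apply: FF0.
by rewrite (lmB FF_lin) e subrr.
Qed.

Lemma exk phi : exists k, q k = phi /\ inM B (J k).
Proof.
have [x0 hx0] := q_surj phi.
pose n := pN x0.
have [x hx] := inj_surj FF_lin FF_inj (erefl _) (- pN (J n)).
pose m := pM x.
have hpN : pN (J m) = - pN (J n).
  have := f_equal pN hx; rewrite /FF (lmD pN_lin) (pN_N (pNP _)) (pN_M (pMP _)) addr0.
  by rewrite (lmN pN_lin) (pN_N (pNP _)).
exists (m + n); split.
  by rewrite qD (qM (pMP x)) add0r q_pN.
have h0 : pN (J (m + n)) = 0 by rewrite JD (lmD pN_lin) hpN addNr.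
by rewrite (pMN (J (m + n))) h0 addr0; apply: pMP.
Qed.


Lemma k_uniq k k' : q k = q k' -> inM B (J k) -> inM B (J k') -> k = k'.
Proof.
move=> /qeqP hd h1 h2; apply/eqP; rewrite -subr_eq0; apply/eqP.
by apply: MJM => //; rewrite JB; apply: inMB.
Qed.

Lemma jJ_M j : is_jJ B q J j -> forall phi, inM B (J (j phi)).
Proof. by case=> _ _ h phi; have [m [hm ->]] := h phi; rewrite JJ; apply: inMN. Qed.

Lemma jJ_uniq j1 j2 : is_jJ B q J j1 -> is_jJ B q J j2 -> forall phi, j1 phi = j2 phi.
Proof.
move=> h1 h2 phi; apply: k_uniq; try exact: jJ_M.
by case: h1 => _ -> _; case: h2 => _ -> _.
Qed.

Lemma exj : exists j, is_jJ B q J j.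
Proof.
have [j hj] := choice_fun exk.
exists j; split.
- move=> a u v; apply: k_uniq.
  + by rewrite (hj _).1 q_lin !(hj _).1.
  + exact: (hj _).2.
  + by rewrite J_lin; apply: inM_lin; apply: (hj _).2.
- by move=> phi; rewrite (hj _).1.
- move=> phi; exists (- J (j phi)); split; first by apply: inMN; apply: (hj _).2.
  by rewrite JN JJ opprK.
Qed.

Lemma jJ_iso j : is_jJ B q J j -> forall phi psi, om (j phi) (j psi) = 0.
Proof.
case=> _ _ h phi psi; have [m [hm ->]] := h phi; have [m' [hm' ->]] := h psi.
by rewrite Jom omMM.
Qed.

Lemma omB a b : B a b = 2 * om a b + B b a.
Proof. rewrite /omega mulrBr !mulrA divff ?pnatr_eq0 // !mul1r; ring. Qed.

Lemma jJ_Bsym j : is_jJ B q J j -> forall phi psi, B (j phi) (j psi) = B (j psi) (j phi).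
Proof. by move=> hj phi psi; rewrite omB (jJ_iso hj) mulr0 add0r. Qed.

Local Open Scope complex_scope.

Lemma OmJ_formula Om j : is_jJ B q J j ->
  (forall x x' : L, Om (q x) (q x') =
        ((gJ B J (j (q x)) (j (q x')))%:C - 'i * (B (j (q x)) x')%:C)) ->
  forall phi psi, Om phi psi = Complex (gJ B J (j phi) (j psi)) (- B (j phi) (j psi)).
Proof.
move=> hj hO phi psi.
have [x <-] := q_surj phi; have [x' <-] := q_surj psi.
rewrite hO cf; congr (Complex _ (- _)); apply: Bq.
by case: hj => _ -> _.
Qed.

Local Close Scope complex_scope.
Lemma part1 : (exists! Om : Q -> Q -> R[i], is_OmegaJ B q J Om) /\ (forall Om : Q -> Q -> R[i], is_OmegaJ B q J Om -> sym_bilinear_posdefRe Om).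
Proof.
have [j hj] := exj.
split.
  exists (fun phi psi => Complex (gJ B J (j phi) (j psi)) (- B (j phi) (j psi))); split.
    exists j; split => // x x'; rewrite cf; congr (Complex _ (- _)); apply: Bq.
    by case: hj => _ -> _.
  move=> Om' [j' [hj' hO']].
  apply: functional_extensionality => phi; apply: functional_extensionality => psi.
  by rewrite (OmJ_formula hj' hO') !(jJ_uniq hj' hj).
move=> Om [j' [hj' hO']]; have F := OmJ_formula hj' hO'.
have jl : linear_map j' by case: hj'.
split.
- by move=> phi psi; rewrite !F gsym (jJ_Bsym hj').
- move=> phi a u v; rewrite !F cscal cadd jl (g2 _) (B2 _); congr Complex; ring.
- move=> phi a u v; rewrite !F cscal cadd jl (g1 _) (B1 _); congr Complex; ring.
- move=> phi hphi; rewrite F -complexRe (_ : 0 = 0%:C)%C // ltcR /=; apply: gpos; apply: contraNneq hphi => h.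
  by case: hj' => _ hq _; rewrite -(hq phi) h q0.
Qed.

End Part1.

Lemma omD1 a b c : om (a + b) c = om a c + om b c. Proof. exact: (slinD (om1 c)). Qed.
Lemma omD2 a b c : om c (a + b) = om c a + om c b. Proof. exact: (slinD (om2 c)). Qed.
Lemma omN1 a c : om (- a) c = - om a c. Proof. exact: (slinN (om1 c)). Qed.
Lemma omN2 a c : om c (- a) = - om c a. Proof. exact: (slinN (om2 c)). Qed.

Lemma Re_lin (a : R) (z w : R[i]) : complex.Re (a%:C * z + w)%C = a * complex.Re z + complex.Re w.
Proof. by case: z => x y; case: w => u v; rewrite cscal cadd. Qed.
Lemma Im_lin (a : R) (z w : R[i]) : complex.Im (a%:C * z + w)%C = a * complex.Im z + complex.Im w.
Proof. by case: z => x y; case: w => u v; rewrite cscal cadd. Qed.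

Section Part2.
Variable Om : Q -> Q -> R[i].
Hypothesis HO : sym_bilinear_posdefRe Om.

Definition G phi psi := complex.Re (Om phi psi).
Definition H phi psi := - complex.Im (Om phi psi).

Lemma OmGH phi psi : Om phi psi = Complex (G phi psi) (- H phi psi).
Proof. by rewrite /G /H opprK; case: (Om phi psi). Qed.
Lemma Gsym phi psi : G phi psi = G psi phi.
Proof. by case: HO => h _ _ _; rewrite /G h. Qed.
Lemma Hsym phi psi : H phi psi = H psi phi.
Proof. by case: HO => h _ _ _; rewrite /H h. Qed.
Lemma G2 phi : slin (G phi).
Proof. by case: HO => _ h _ _ a u v; rewrite /G h Re_lin. Qed.
Lemma G1 psi : slin (G^~ psi).
Proof. by case: HO => _ _ h _ a u v; rewrite /G h Re_lin. Qed.
Lemma H2 phi : slin (H phi).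
Proof. by case: HO => _ h _ _ a u v; rewrite /H h Im_lin; ring. Qed.
Lemma H1 psi : slin (H^~ psi).
Proof. by case: HO => _ _ h _ a u v; rewrite /H h Im_lin; ring. Qed.
Lemma Gpos phi : phi != 0 -> 0 < G phi phi.
Proof.
case: HO => _ _ _ h /h; rewrite -complexRe (_ : 0 = 0%:C)%C // ltcR.
by [].
Qed.
Lemma Gge0 phi : 0 <= G phi phi.
Proof.
have [->|h] := eqVneq phi 0; last by apply/ltW/Gpos.
by rewrite (slin0 (G2 0)).
Qed.


Lemma Hq_lin phi : slin (fun y => H phi (q y)).
Proof. by move=> a u v; rewrite q_lin (H2 phi). Qed.
Lemma Gq_lin phi : slin (fun y => G phi (q y)).
Proof. by move=> a u v; rewrite q_lin (G2 phi). Qed.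

Lemma exA phi : exists k, q k = phi /\ forall y, B k y = H phi (q y).
Proof.
have hf : slin (fun y => 2^-1 * H phi (q y)).
  by move=> a u v; rewrite (Hq_lin phi); ring.
have h0 : forall m, inM B m -> 2^-1 * H phi (q m) = 0.
  by move=> m hm; rewrite (qM hm) (slin0 (H2 phi)) mulr0.
have [m [hm hom]] := RepM hf h0.
have [x0 hx0] := q_surj phi.
exists (m + pN x0); split; first by rewrite qD (qM hm) add0r q_pN.
move=> y; rewrite (slinD (B1 y)) (pNP x0) addr0.
have := hom y; rewrite omM // => /(congr1 (fun t => 2 * t)).
by rewrite !mulrA divff ?pnatr_eq0 // !mul1r.
Qed.

Lemma A_uniq k k' : q k = q k' -> (forall y, B k y = B k' y) -> k = k'.
Proof. by move=> e h; apply: om_inj => y; rewrite /omega h (Bq y e). Qed.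

Definition jj phi := proj1_sig (constructive_indefinite_description _ (exA phi)).
Lemma jj_q phi : q (jj phi) = phi.
Proof. exact: (proj2_sig (constructive_indefinite_description _ (exA phi))).1. Qed.
Lemma jj_B phi y : B (jj phi) y = H phi (q y).
Proof. exact: (proj2_sig (constructive_indefinite_description _ (exA phi))).2. Qed.
Lemma jj_lin : linear_map jj.
Proof.
move=> a u v; apply: A_uniq; first by rewrite q_lin !jj_q.
by move=> y; rewrite (B1 y) !jj_B (H1 (q y)).
Qed.
Lemma jj_iso phi psi : om (jj phi) (jj psi) = 0.
Proof. by rewrite /omega !jj_B !jj_q Hsym subrr. Qed.

Lemma exS psi : exists m, inM B m /\ forall y, om m y = 2^-1 * G psi (q y).
Proof.
have hf : slin (fun y => 2^-1 * G psi (q y)).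
  by move=> a u v; rewrite (Gq_lin psi); ring.
have h0 : forall m, inM B m -> 2^-1 * G psi (q m) = 0.
  by move=> m hm; rewrite (qM hm) (slin0 (G2 psi)) mulr0.
exact: RepM hf h0.
Qed.

Definition SS psi := proj1_sig (constructive_indefinite_description _ (exS psi)).
Lemma SS_M psi : inM B (SS psi).
Proof. exact: (proj2_sig (constructive_indefinite_description _ (exS psi))).1. Qed.
Lemma SS_om psi y : om (SS psi) y = 2^-1 * G psi (q y).
Proof. exact: (proj2_sig (constructive_indefinite_description _ (exS psi))).2. Qed.
Lemma SS_lin : linear_map SS.
Proof.
move=> a u v; apply: om_inj => y.
by rewrite (om1 y) !SS_om (G1 (q y)); ring.
Qed.
Lemma SS_jj psi phi : om (SS psi) (jj phi) = 2^-1 * G psi phi.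
Proof. by rewrite SS_om jj_q. Qed.
Lemma SS_iso psi phi : om (SS psi) (SS phi) = 0.
Proof. by apply: omMM; apply: SS_M. Qed.

Lemma Gnd psi : (forall phi, G psi phi = 0) -> psi = 0.
Proof.
move=> h; apply/eqP; apply: contraT => hn.
by have := Gpos hn; rewrite h ltxx.
Qed.

Lemma SS_inj : injective SS.
Proof.
move=> a b e; apply/eqP; rewrite -subr_eq0; apply/eqP; apply: Gnd => phi.
have [y <-] := q_surj phi.
have := SS_om a y; rewrite e SS_om => h.
rewrite (slinB (G1 _)).
have h2 : G a (q y) = G b (q y).
  by have := congr1 (fun t => 2 * t) h; rewrite !mulrA divff ?pnatr_eq0 // !mul1r.
by rewrite h2 subrr.
Qed.

Lemma split_x x : inM B (x - jj (q x)).
Proof. by apply/qeqP; rewrite jj_q. Qed.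

Lemma om_M_jj m y : inM B m -> om m y = om m (jj (q y)).
Proof.
move=> hm; rewrite -{1}(subrK (jj (q y)) y) omD2 omMM ?add0r //.
exact: split_x.
Qed.

Lemma SS_surj m : inM B m -> exists psi, SS psi = m.
Proof.
move=> hm.
have hb2 : forall x, slin (G x) by move=> x; apply: G2.
have hf : slin (fun phi => 2 * om m (jj phi)).
  by move=> a u v; rewrite jj_lin (om2 m); ring.
have [psi hpsi] := riesz hb2 G1 Gnd hf.
exists psi; apply: om_inj => y.
by rewrite SS_om hpsi (om_M_jj y hm) mulrA mulVf ?pnatr_eq0 // mul1r.
Qed.

Lemma expsi x : exists psi, SS psi = x - jj (q x).
Proof. exact: SS_surj (split_x x). Qed.

Definition psi x := proj1_sig (constructive_indefinite_description _ (expsi x)).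
Lemma psiP x : SS (psi x) = x - jj (q x).
Proof. exact: (proj2_sig (constructive_indefinite_description _ (expsi x))). Qed.
Lemma x_split x : x = SS (psi x) + jj (q x).
Proof. by rewrite psiP subrK. Qed.
Lemma psi_lin : linear_map psi.
Proof.
move=> a u v; apply: SS_inj.
rewrite psiP SS_lin !psiP q_lin jj_lin.
rewrite scalerBr addrACA opprD.
by [].
Qed.

Definition JJ' x := jj (psi x) - SS (q x).

Lemma JJ'_lin : linear_map JJ'.
Proof.
move=> a u v; rewrite /JJ' psi_lin jj_lin q_lin SS_lin.
by rewrite scalerBr addrACA opprD.
Qed.


Lemma SS0 : SS 0 = 0. Proof. exact: lm0 SS_lin. Qed.
Lemma jj0 : jj 0 = 0. Proof. exact: lm0 jj_lin. Qed.
Lemma psi_SS phi : psi (SS phi) = phi.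
Proof. by apply: SS_inj; rewrite psiP (qM (SS_M phi)) jj0 subr0. Qed.
Lemma psi_jj phi : psi (jj phi) = 0.
Proof. by apply: SS_inj; rewrite psiP jj_q subrr SS0. Qed.
Lemma q_JJ x : q (JJ' x) = psi x.
Proof. by rewrite /JJ' qB jj_q (qM (SS_M _)) subr0. Qed.
Lemma psi_JJ x : psi (JJ' x) = - q x.
Proof.
apply: SS_inj; rewrite psiP q_JJ /JJ' (lmN SS_lin).
by rewrite addrAC subrr add0r.
Qed.
Lemma JJJ x : JJ' (JJ' x) = - x.
Proof.
rewrite {1}/JJ' psi_JJ q_JJ psiP (lmN jj_lin).
by rewrite opprB addKr.
Qed.

Lemma om_form a b c d : om (SS a + jj b) (SS c + jj d) = 2^-1 * G a d - 2^-1 * G c b.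
Proof.
rewrite !omD1 !omD2 SS_iso jj_iso SS_jj (om_anti (SS c) (jj b)) SS_jj; ring.
Qed.

Lemma JJ_split x : JJ' x = SS (- q x) + jj (psi x).
Proof. by rewrite /JJ' (lmN SS_lin) addrC. Qed.

Lemma JJom x y : om (JJ' x) (JJ' y) = om x y.
Proof.
rewrite !JJ_split [in RHS](x_split x) [in RHS](x_split y) !om_form.
rewrite !(slinN (G1 _)) (Gsym (q x)) (Gsym (q y)); ring.
Qed.

Lemma JJpos x : x != 0 -> 0 < gJ B JJ' x x.
Proof.
move=> hx; rewrite /gJ {1}(x_split x) JJ_split om_form (slinN (G1 _)).
have h1 := Gge0 (psi x); have h2 := Gge0 (q x).
have [hp|hp] := eqVneq (psi x) 0.
  have [hq|hq] := eqVneq (q x) 0.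
    by move: hx; rewrite (x_split x) hp hq SS0 jj0 addr0 eqxx.
  have := Gpos hq; lra.
have := Gpos hp; lra.
Qed.

Lemma JJ_cs : complex_structure B JJ'.
Proof. split; [exact: JJ'_lin | exact: JJJ | exact: JJom | exact: JJpos]. Qed.

Lemma jj_jJ : is_jJ B q JJ' jj.
Proof.
split; [exact: jj_lin | exact: jj_q |].
move=> phi; exists (SS phi); split; first exact: SS_M.
by rewrite /JJ' psi_SS (qM (SS_M _)) SS0 subr0.
Qed.

Lemma JJ_Om : is_OmegaJ B q JJ' Om.
Proof.
exists jj; split; first exact: jj_jJ.
move=> x x'; rewrite cf OmGH jj_B; congr Complex.
rewrite /gJ /JJ' psi_jj jj0 jj_q sub0r omN2 om_anti opprK SS_jj Gsym.
by rewrite mulrA divff ?pnatr_eq0 // mul1r.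
Qed.

Lemma part2 : exists! J : L -> L, complex_structure B J /\ is_OmegaJ B q J Om.
Proof.
exists JJ'; split; first by split; [exact: JJ_cs | exact: JJ_Om].
move=> J' [HJ' [j' [hj' hO']]].
have F := OmJ_formula hj' hO'.
have eG : forall phi psi, G phi psi = gJ B J' (j' phi) (j' psi).
  by move=> phi psi; rewrite /G F.
have eH : forall phi psi, H phi psi = B (j' phi) (j' psi).
  by move=> phi psi; rewrite /H F /= opprK.
have hq' : forall phi, q (j' phi) = phi by case: hj'.
have ej : forall phi, j' phi = jj phi.
  move=> phi; apply: A_uniq; first by rewrite hq' jj_q.
  by move=> y; rewrite jj_B (Bq _ (esym (hq' (q y)))) eH.
have JS : forall ps, J' (SS ps) = jj ps.
  move=> ps; case: hj' => _ _ /(_ ps) [m [hm hjm]].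
  suff -> : SS ps = m by rewrite -hjm ej.
  apply: om_inj => y; rewrite SS_om (om_M_jj y hm).
  have := eG (q y) ps; rewrite /gJ hjm (JJ HJ') omN2 om_anti opprK ej Gsym => ->.
  by rewrite mulrA mulVf ?pnatr_eq0 // mul1r.
apply: functional_extensionality => x.
have -> : J' x = J' (SS (psi x) + jj (q x)) by rewrite -x_split.
rewrite (lmD (J_lin HJ')) JS /JJ'; congr (_ + _).
by rewrite -(JS (q x)) (JJ HJ').
Qed.

End Part2.

Theorem proposition3p3' :
  (forall J : L -> L, complex_structure B J ->
     (exists! Om : Q -> Q -> R[i], is_OmegaJ B q J Om) /\
     (forall Om : Q -> Q -> R[i], is_OmegaJ B q J Om -> sym_bilinear_posdefRe Om)) /\
  (forall Om : Q -> Q -> R[i], sym_bilinear_posdefRe Om ->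
     exists! J : L -> L, complex_structure B J /\ is_OmegaJ B q J Om).
Proof. split; [exact: part1 | exact: part2]. Qed.
End Main.

Unset Implicit Arguments.
Set Strict Implicit.

Theorem proposition3p3 (R : realType) (L : vectType R) (B : L -> L -> R)
    (Q : vectType R) (q : L -> Q) :
  bilinear_form B ->
  nondegenerate_form (omega B) ->
  direct_sum_MN B ->
  quotient_map_by_M B q ->
  (forall J : L -> L, complex_structure B J ->
     (exists! Om : Q -> Q -> R[i], is_OmegaJ B q J Om) /\
     (forall Om : Q -> Q -> R[i], is_OmegaJ B q J Om -> sym_bilinear_posdefRe Om)) /\
  (forall Om : Q -> Q -> R[i], sym_bilinear_posdefRe Om ->
     exists! J : L -> L, complex_structure B J /\ is_OmegaJ B q J Om).
Proof.
move=> HB Hnd Hds Hq; exact: (proposition3p3' HB Hnd Hds Hq).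
Qed.
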